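(* Let $D$ be a database, $R$ a regular expression and $\mathcal{A}$ any automaton with $L(R)=L(\mathcal{A})$. Let $s,t$ be vertices of $D$ and let $P$ be the set of walks of $\llbracket\mathcal{A}\rrbracket_W(D)$ going from $s$ to $t$. If $w\in P$ has minimal length in $P$, then $w\in\llbracket R\rrbracket_{BT}(D)$.
   Context: A database is $D=(\Sigma,V,E,\mathrm{src},\mathrm{tgt},\mathrm{lbl})$ with finite alphabet $\Sigma$, finite vertex set $V$, finite edge set $E$, $\mathrm{src},\mathrm{tgt}:E\to V$, $\mathrm{lbl}:E\to2^\Sigma$; a walk is $(n_0,e_0,\dots,e_{k-1},n_k)$ with $\mathrm{src}(e_i)=n_i$, $\mathrm{tgt}(e_i)=n_{i+1}$, of length $k$, with $\mathrm{lbl}(w)=\{u_0\cdots u_{k-1}:u_i\in\mathrm{lbl}(e_i)\}$. For an automaton $\mathcal{A}$, the walk semantics $\llbracket\mathcal{A}\rrbracket_W(D)$ consists of the walks $w$ of $D$ with $\mathrm{lbl}(w)\cap L(\mathcal{A})\ne\emptyset$ (as projections of runs of the product $D\times\mathcal{A}$). Regular expressions: $R::=\varepsilon\mid a\mid R^*\mid R\cdot R\mid R+R$. A linearisation $R'$ of $R$ replaces each atom occurrence by a distinct fresh symbol (position) of an alphabet $\Gamma$; $\overline\alpha\in\Sigma$ denotes the original letter of position $\alpha$. A binding trail of $D$ matching $R$ is a sequence $(e_1,\alpha_1)\cdots(e_n,\alpha_n)\in(E\times\Gamma)^*$ with $e_1\cdots e_n$ a walk of $D$, $\overline{\alpha_1\cdots\alpha_n}\in\mathrm{lbl}(e_1\cdots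 e_n)$, $\alpha_1\cdots\alpha_n\in L(R')$, and the pairs $(e_i,\alpha_i)$ pairwise distinct. $\llbracket R\rrbracket_{BT}(D)$ is the bag of the walks $e_1\cdots e_n$ underlying binding trails of $D$ matching $R$. *)

(* Defs.v *)
From mathcomp Require Import all_boot.
Set Implicit Arguments. Unset Strict Implicit. Unset Printing Implicit Defensive.

Record database (Sigma : finType) := Database {
  vertex : finType;
  edge : finType;
  src : edge -> vertex;
  tgt : edge -> vertex;
  lbl : edge -> {set Sigma} }.

(* A walk (n0, e0, ..., e_{k-1}, n_k) is represented by its start vertex n0
   and its edge sequence [e0; ...; e_{k-1}] (the other vertices are determined). *)
Fixpoint is_walk_from (Sigma : finType) (D : database Sigma)
    (n0 : vertex D) (es : seq (edge D)) : bool :=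
  if es is e :: es' then (src e == n0) && is_walk_from (tgt e) es' else true.

Definition walk_end (Sigma : finType) (D : database Sigma)
    (n0 : vertex D) (es : seq (edge D)) : vertex D := last n0 (map (@tgt _ D) es).

Definition in_walk_lbl (Sigma : finType) (D : database Sigma)
    (es : seq (edge D)) (u : seq Sigma) : bool :=
  all2 (fun e a => a \in lbl e) es u.

Record automaton (Sigma : finType) := Automaton {
  state : finType;
  init : {set state};
  final : {set state};
  trans : state -> Sigma -> {set state} }.

Fixpoint accepts_from (Sigma : finType) (A : automaton Sigma)
    (q : state A) (w : seq Sigma) : bool :=
  if w is a :: w' then [exists q', (q' \in trans q a) && accepts_from q' w']
  else q \in final A.

Definition aut_lang (Sigma : finType) (A : automaton Sigma) (w : seq Sigma) : Prop :=
  exists2 q0, q0 \in init A & accepts_from q0 w.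

Definition in_walk_sem (Sigma : finType) (A : automaton Sigma) (D : database Sigma)
    (n0 : vertex D) (es : seq (edge D)) : Prop :=
  is_walk_from n0 es /\ exists u, in_walk_lbl es u /\ aut_lang A u.

Inductive regex (A : Type) :=
  | Eps
  | Atom of A
  | Star of regex A
  | Cat of regex A & regex A
  | Alt of regex A & regex A.
Arguments Eps {A}.

Inductive matches {A : Type} : regex A -> seq A -> Prop :=
  | m_eps : matches Eps [::]
  | m_atom a : matches (Atom a) [:: a]
  | m_cat r1 r2 w1 w2 : matches r1 w1 -> matches r2 w2 -> matches (Cat r1 r2) (w1 ++ w2)
  | m_alt_l r1 r2 w : matches r1 w -> matches (Alt r1 r2) w
  | m_alt_r r1 r2 w : matches r2 w -> matches (Alt r1 r2) w
  | m_star_nil r : matches (Star r) [::]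
  | m_star_cons r w1 w2 : matches r w1 -> matches (Star r) w2 -> matches (Star r) (w1 ++ w2).

Fixpoint atoms {A : Type} (R : regex A) : seq A :=
  match R with
  | Eps => [::]
  | Atom a => [:: a]
  | Star r => atoms r
  | Cat r1 r2 => atoms r1 ++ atoms r2
  | Alt r1 r2 => atoms r1 ++ atoms r2
  end.

(* Linearisation: the i-th atom occurrence (from left to right, counting from k)
   is replaced by the position i; positions are the alphabet Gamma = nat. *)
Fixpoint lin_from {A : Type} (k : nat) (R : regex A) : regex nat :=
  match R with
  | Eps => Eps
  | Atom _ => Atom k
  | Star r => Star (lin_from k r)
  | Cat r1 r2 => Cat (lin_from k r1) (lin_from (k + size (atoms r1)) r2)
  | Alt r1 r2 => Alt (lin_from k r1) (lin_from (k + size (atoms r1)) r2)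
  end.

Definition linearise {A : Type} (R : regex A) : regex nat := lin_from 0 R.

Definition orig_letter {A : Type} (R : regex A) (alpha : nat) : option A :=
  nth None (map Some (atoms R)) alpha.

(* (e_1,alpha_1)...(e_n,alpha_n), zipped from es and alphas, is a binding trail
   of D matching R, whose underlying walk starts at n0. *)
Definition binding_trail (Sigma : finType) (D : database Sigma) (R : regex Sigma)
    (n0 : vertex D) (es : seq (edge D)) (alphas : seq nat) : Prop :=
  [/\ size alphas = size es,
      is_walk_from n0 es,
      all2 (fun e alpha => if orig_letter R alpha is Some a then a \in lbl e else false)
           es alphas,
      matches (linearise R) alphas
    & uniq (zip es alphas)].

(* membership of the walk (n0, es) in (the support of the bag) [[R]]_BT(D) *)
Definition in_BT_sem (Sigma : finType) (D : database Sigma) (R : regex Sigma)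
    (n0 : vertex D) (es : seq (edge D)) : Prop :=
  exists alphas, @binding_trail Sigma D R n0 es alphas.

(* Main.v *)
Require Import Defs.
From mathcomp Require Import all_boot.
From mathcomp Require Import zify.
Set Implicit Arguments. Unset Strict Implicit. Unset Printing Implicit Defensive.

Section Reg.
Variable T : Type.

Lemma inv_cat (r1 r2 : regex T) w : matches (Cat r1 r2) w ->
  exists w1 w2, [/\ w = w1 ++ w2, matches r1 w1 & matches r2 w2].
Proof. move=> H; inversion H; subst; eauto; by exists w1, w2. Qed.

Lemma inv_alt (r1 r2 : regex T) w : matches (Alt r1 r2) w -> matches r1 w \/ matches r2 w.
Proof. move=> H; inversion H; subst; eauto; by exists w1, w2. Qed.

Lemma inv_atom (b : T) w : matches (Atom b) w -> w = [:: b].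
Proof. move=> H; inversion H; subst; eauto; by exists w1, w2. Qed.

Lemma inv_eps w : matches (@Eps T) w -> w = [::].
Proof. move=> H; inversion H; subst; eauto; by exists w1, w2. Qed.

Lemma star_app (r : regex T) w1 w2 : matches (Star r) w1 -> matches (Star r) w2 -> matches (Star r) (w1 ++ w2).
Proof.
move=> H; remember (Star r) as e eqn:He; elim: H He => //=.
move=> r0 w3 w4 H1 _ _ IH [E] H2; subst r0. rewrite -catA. constructor => //. exact: IH.
Qed.

Lemma split_occ (w1 w2 u v : seq T) a : w1 ++ w2 = u ++ a :: v ->
  (exists d, w1 = u ++ a :: d /\ v = d ++ w2) \/ (exists u', u = w1 ++ u' /\ w2 = u' ++ a :: v).
Proof.
elim: w1 u => [|x w1 IH] u /=; first by move=> ->; right; exists u.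
case: u => [|y u] /=.
  by case=> -> <-; left; exists w1.
case=> -> /IH [[d [-> ->]]|[u' [-> ->]]]; [left; exists d | right; exists u'] => //.
Qed.

Lemma star_occ (r : regex T) w : matches (Star r) w -> forall u a v, w = u ++ a :: v ->
  exists p c d q, [/\ matches (Star r) p, matches r (c ++ a :: d), matches (Star r) q,
     u = p ++ c & v = d ++ q].
Proof.
move=> H; remember (Star r) as e eqn:He; elim: H He => //=.
  by move=> r0 _ []...
move=> r0 w1 w2 H1 _ H2 IH Er u a v. have Er' : r0 = r by case: Er. subst r0.
case/split_occ=> [[d [E1 E2]]|[u' [E1 E2]]].
  exists [::], u, d, w2; split => //; [constructor| by rewrite -E1].
have [p [c [d [q [Hp Hc Hq Eu Ev]]]]] := IH erefl _ _ _ E2. subst.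
exists (w1 ++ p), c, d, q; split => //; first by constructor.
by rewrite catA.
Qed.
End Reg.

Lemma mem_match (T : eqType) (r : regex T) w : matches r w -> {subset w <= atoms r}.
Proof.
elim => //= [a|r1 r2 w1 w2 _ IH1 _ IH2|r1 r2 w0 _ IH|r1 r2 w0 _ IH|r0 w1 w2 _ IH1 _ IH2] x.
- by [].
- by rewrite !mem_cat => /orP[/IH1|/IH2] ->; rewrite ?orbT.
- by rewrite mem_cat => /IH ->.
- by rewrite mem_cat => /IH ->; rewrite orbT.
- by rewrite mem_cat => /orP[/IH1|/IH2].
Qed.

Lemma disj (T : eqType) (s1 s2 : seq T) a : uniq (s1 ++ s2) -> a \in s1 -> a \in s2 -> False.
Proof.
rewrite cat_uniq => /and3P[_ /hasPn H _] H1 H2.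
by move: (H a H2) => /=; rewrite H1.
Qed.

Lemma exch (T : eqType) (r : regex T) : uniq (atoms r) -> forall a u1 v1 u2 v2,
  matches r (u1 ++ a :: v1) -> matches r (u2 ++ a :: v2) -> matches r (u1 ++ a :: v2).
Proof.
elim: r => [|b|r IH|r1 IH1 r2 IH2|r1 IH1 r2 IH2] /= Hu a u1 v1 u2 v2.
- by move/inv_eps; case: u1.
- move=> H1 H2; have E1 := inv_atom H1; have E2 := inv_atom H2; clear H1 H2.
  case: u1 E1 => [|x [|y u1]] //= [Eab Ev1].
  case: u2 E2 => [|x [|y u2]] //= [_ Ev2].
  by rewrite Ev2 Eab; constructor.
- move/star_occ => /(_ _ _ _ erefl) [p1 [c1 [d1 [q1 [Hp1 Hc1 Hq1 -> _]]]]].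
  move/star_occ => /(_ _ _ _ erefl) [p2 [c2 [d2 [q2 [Hp2 Hc2 Hq2 _ ->]]]]].
  have -> : (p1 ++ c1) ++ a :: d2 ++ q2 = p1 ++ ((c1 ++ a :: d2) ++ q2) by rewrite -!catA.
  apply: star_app => //.
  constructor => //. exact: IH Hc1 Hc2.
- have U1 : uniq (atoms r1) by move: Hu; rewrite cat_uniq => /and3P[].
  have U2 : uniq (atoms r2) by move: Hu; rewrite cat_uniq => /and3P[].
  move/inv_cat => [w1 [w2 [E H1 H2]]] /inv_cat [w1' [w2' [E' H1' H2']]].
  case: (split_occ (esym E)) => [[d [Ew1 Ev1]]|[u' [Eu1 Ew2]]];
  case: (split_occ (esym E')) => [[d' [Ew1' Ev2]]|[u'' [Eu2 Ew2']]].
  + subst. rewrite -cat_cons catA. constructor => //. exact: IH1 H1 H1'.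
  + subst. exfalso; apply: (disj Hu (a := a)).
      by apply: (mem_match H1); rewrite mem_cat inE eqxx orbT.
    by apply: (mem_match H2'); rewrite mem_cat inE eqxx orbT.
  + subst. exfalso; apply: (disj Hu (a := a)).
      by apply: (mem_match H1'); rewrite mem_cat inE eqxx orbT.
    by apply: (mem_match H2); rewrite mem_cat inE eqxx orbT.
  + subst. rewrite -catA. constructor => //. exact: IH2 H2 H2'.
- have U1 : uniq (atoms r1) by move: Hu; rewrite cat_uniq => /and3P[].
  have U2 : uniq (atoms r2) by move: Hu; rewrite cat_uniq => /and3P[].
  have ina : forall u v, a \in u ++ a :: v by move=> u v; rewrite mem_cat inE eqxx orbT.
  case/inv_alt => H1; case/inv_alt => H2.
  + by apply: m_alt_l; exact: IH1 H1 H2.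
  + by exfalso; apply: (disj Hu (mem_match H1 (ina _ _)) (mem_match H2 (ina _ _))).
  + by exfalso; apply: (disj Hu (mem_match H2 (ina _ _)) (mem_match H1 (ina _ _))).
  + by apply: m_alt_r; exact: IH2 H1 H2.
Qed.

Lemma atoms_lin (A : Type) (R : regex A) k : atoms (lin_from k R) = iota k (size (atoms R)).
Proof.
elim: R k => [|a|r IH|r1 IH1 r2 IH2|r1 IH1 r2 IH2] k /=; rewrite ?IH ?IH1 ?IH2 ?size_cat ?iotaD //.
Qed.

Lemma lin_uniq (A : Type) (R : regex A) : uniq (atoms (linearise R)).
Proof. by rewrite /linearise atoms_lin iota_uniq. Qed.

Definition g (A : Type) (R : regex A) k (x : nat) := nth None (map Some (atoms R)) (x - k).

Lemma gl (A : Type) (s1 s2 : seq A) k x : x \in iota k (size s1) ->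
  nth None (map Some (s1 ++ s2)) (x - k) = nth None (map Some s1) (x - k).
Proof. rewrite mem_iota map_cat nth_cat size_map => /andP[H1 H2]. by have -> : x - k < size s1 by lia. Qed.

Lemma gr (A : Type) (s1 s2 : seq A) k x : x \in iota (k + size s1) (size s2) ->
  nth None (map Some (s1 ++ s2)) (x - k) = nth None (map Some s2) (x - (k + size s1)).
Proof.
rewrite mem_iota map_cat nth_cat size_map => /andP[H1 H2].
have -> : x - k < size s1 = false by lia.
congr nth; lia.
Qed.

Lemma lin_complete (A : Type) (R : regex A) u : matches R u -> forall k,
  exists al, matches (lin_from k R) al /\ map (g R k) al = map Some u.
Proof.
elim => /= [|a|r1 r2 w1 w2 _ IH1 _ IH2|r1 r2 w _ IH|r1 r2 w _ IH|r|r w1 w2 _ IH1 _ IH2] k.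
- by exists [::]; split => //; constructor.
- exists [:: k]; split; first constructor. by rewrite /= /g subnn.
- have [al1 [H1 E1]] := IH1 k. have [al2 [H2 E2]] := IH2 (k + size (atoms r1)).
  exists (al1 ++ al2); split; first by constructor.
  rewrite !map_cat -E1 -E2; congr (_ ++ _); apply/eq_in_map => x Hx; rewrite /g /=.
    by apply: gl; rewrite -atoms_lin; exact: (mem_match H1).
  by apply: gr; rewrite -atoms_lin; exact: (mem_match H2).
- have [al1 [H1 E1]] := IH k. exists al1; split; first by constructor.
  rewrite -E1; apply/eq_in_map => x Hx; rewrite /g /=.
  by apply: gl; rewrite -atoms_lin; exact: (mem_match H1).
- have [al1 [H1 E1]] := IH (k + size (atoms r1)). exists al1; split; first by apply: m_alt_r.
  rewrite -E1; apply/eq_in_map => x Hx; rewrite /g /=.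
  by apply: gr; rewrite -atoms_lin; exact: (mem_match H1).
- by exists [::]; split => //; constructor.
- have [al1 [H1 E1]] := IH1 k. have [al2 [H2 E2]] := IH2 k.
  exists (al1 ++ al2); split; first by constructor.
  by rewrite !map_cat -E1 -E2.
Qed.

Lemma split_map (X Y : Type) (f : X -> option Y) w1 w2 u : map f (w1 ++ w2) = map Some u ->
  exists u1 u2, [/\ u = u1 ++ u2, map f w1 = map Some u1 & map f w2 = map Some u2].
Proof.
elim: w1 u => [|x w1 IH] u /=; first by move=> E; exists [::], u.
case: u => [|y u] //= [E1 /IH [u1 [u2 [-> E2 E3]]]].
by exists (y :: u1), u2; rewrite /= E1 E2.
Qed.

Lemma lin_sound (A : Type) x al : matches x al -> forall (R : regex A) k, x = lin_from k R ->
  forall u, map (g R k) al = map Some u -> matches R u.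
Proof.
elim => [|a|r1 r2 w1 w2 H1 IH1 H2 IH2|r1 r2 w H IH|r1 r2 w H IH|r|r w1 w2 H1 IH1 H2 IH2] [] //=.
- by move=> k _ [] // _; constructor.
- move=> b k [->] u. rewrite /g subnn /=. case: u => [|y [|z u]] //= [->]. constructor.
- move=> R1 R2 k [E1 E2] u /split_map [u1 [u2 [-> F1 F2]]]. constructor.
    apply: (IH1 R1 k E1). rewrite -F1; apply/eq_in_map => y Hy; rewrite /g /= gl //.
    by rewrite -atoms_lin -E1; exact: (mem_match H1).
  apply: (IH2 R2 _ E2). rewrite -F2; apply/eq_in_map => y Hy; rewrite /g /= gr //.
  by rewrite -atoms_lin -E2; exact: (mem_match H2).
- move=> R1 R2 k [E1 E2] u F. apply: m_alt_l.
  apply: (IH R1 k E1). rewrite -F; apply/eq_in_map => y Hy; rewrite /g /= gl //.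
  by rewrite -atoms_lin -E1; exact: (mem_match H).
- move=> R1 R2 k [E1 E2] u F. apply: m_alt_r.
  apply: (IH R2 _ E2). rewrite -F; apply/eq_in_map => y Hy; rewrite /g /= gr //.
  by rewrite -atoms_lin -E2; exact: (mem_match H).
- by move=> R1 k _ [] // _; constructor.
- move=> R1 k [E1] u /split_map [u1 [u2 [-> F1 F2]]]. constructor.
    exact: (IH1 R1 k E1).
  by apply: (IH2 (Star R1) k); rewrite ?E1.
Qed.

Lemma in_split (T : eqType) (y : T) s : y \in s -> exists s2 s3, s = s2 ++ y :: s3.
Proof.
elim: s => [|x s IH] //=; rewrite inE => /orP[/eqP ->|/IH [s2 [s3 ->]]].
  by exists [::], s.
by exists (x :: s2), s3.
Qed.

Lemma nuniq_split (T : eqType) (s : seq T) : ~~ uniq s ->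
  exists s1 x s2 s3, s = s1 ++ x :: s2 ++ x :: s3.
Proof.
elim: s => [|y s IH] //=; rewrite negb_and negbK => /orP[/in_split [s2 [s3 ->]]|/IH [s1 [x [s2 [s3 ->]]]]].
  by exists [::], y, s2, s3.
by exists (y :: s1), x, s2, s3.
Qed.

Section W.
Variables (Sigma : finType) (D : database Sigma).

Lemma walk_cat (n : vertex D) x y :
  is_walk_from n (x ++ y) = is_walk_from n x && is_walk_from (walk_end n x) y.
Proof. by elim: x n => [|e x IH] n //=; rewrite IH andbA. Qed.

Lemma walk_end_cat (n : vertex D) x y : walk_end n (x ++ y) = walk_end (walk_end n x) y.
Proof. by rewrite /walk_end map_cat last_cat. Qed.

Lemma walk_end_cons (n : vertex D) e x : walk_end n (e :: x) = walk_end (tgt e) x.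
Proof. by []. Qed.

Lemma Q1 (f : nat -> option Sigma) (es : seq (edge D)) u al :
  in_walk_lbl es u -> map f al = map Some u ->
  all2 (fun e alpha => if f alpha is Some a then a \in lbl e else false) es al.
Proof.
rewrite /in_walk_lbl.
elim: es u al => [|e es IH] [|a u] [|x al] //=.
case/andP=> H1 H2 [E1 E2]. by rewrite E1 H1 (IH u).
Qed.

Lemma Q2 (f : nat -> option Sigma) (es : seq (edge D)) al :
  all2 (fun e alpha => if f alpha is Some a then a \in lbl e else false) es al ->
  in_walk_lbl es (pmap f al) /\ map f al = map Some (pmap f al).
Proof.
rewrite /in_walk_lbl.
elim: es al => [|e es IH] [|x al] //=.
case E: (f x) => [a|] //= /andP[H1 /IH [H2 H3]].
by rewrite H1 H2 H3.
Qed.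
End W.

Lemma u1cat (X Y : Type) (x y : seq (X * Y)) : unzip1 (x ++ y) = unzip1 x ++ unzip1 y.
Proof. exact: map_cat. Qed.
Lemma u2cat (X Y : Type) (x y : seq (X * Y)) : unzip2 (x ++ y) = unzip2 x ++ unzip2 y.
Proof. exact: map_cat. Qed.
Lemma sz1 (X Y : Type) (x : seq (X * Y)) : size (unzip1 x) = size x.
Proof. exact: size_map. Qed.
Lemma sz2 (X Y : Type) (x : seq (X * Y)) : size (unzip2 x) = size x.
Proof. exact: size_map. Qed.

Theorem proposition29 (Sigma : finType) (D : database Sigma) (R : regex Sigma)
    (A : automaton Sigma)
    (hlang : forall u : seq Sigma, matches R u <-> aut_lang A u)
    (s t : vertex D) (n0 : vertex D) (es : seq (edge D))
    (hP : [/\ in_walk_sem A n0 es, n0 = s & walk_end n0 es = t])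
    (hmin : forall (n1 : vertex D) (es' : seq (edge D)),
        [/\ in_walk_sem A n1 es', n1 = s & walk_end n1 es' = t] ->
        size es <= size es') :
  @in_BT_sem Sigma D R n0 es.
Proof.
case: hP => [[Hw [u [Hl Ha]]] En Et].
have Hm : matches R u by apply/hlang.
have [al [Hal Eal]] := lin_complete Hm 0.
have Hsu : size es = size u by move: Hl; rewrite /in_walk_lbl all2E => /andP[/eqP].
have Hsz : size al = size es by rewrite Hsu -(size_map Some u) -Eal size_map.
have Eorig : map (orig_letter R) al = map Some u.
  by rewrite -Eal; apply: eq_map => x; rewrite /g subn0.
have HQ := Q1 Hl Eorig.
exists al; split => //.
case Hu: (uniq (zip es al)) => //. exfalso.
have [s1 [[e a] [s2 [s3 Ez]]]] := nuniq_split (negbT Hu).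
have Hes : es = unzip1 s1 ++ e :: unzip1 s2 ++ e :: unzip1 s3.
  have H : unzip1 (zip es al) = es by apply: unzip1_zip; rewrite Hsz.
  by rewrite -H Ez /unzip1 /unzip2 map_cat /= map_cat.
have Hals : al = unzip2 s1 ++ a :: unzip2 s2 ++ a :: unzip2 s3.
  have H : unzip2 (zip es al) = al by apply: unzip2_zip; rewrite Hsz.
  by rewrite -H Ez /unzip1 /unzip2 map_cat /= map_cat.
set z' := s1 ++ (e, a) :: s3.
have Hal' : matches (linearise R) (unzip2 z').
  rewrite /z' u2cat /=.
  apply: (exch (lin_uniq R) (v1 := unzip2 s2 ++ a :: unzip2 s3) (u2 := unzip2 s1 ++ a :: unzip2 s2)).
    by rewrite -Hals.
  by rewrite -catA /= -Hals.
have HQ' : all2 (fun e alpha => if orig_letter R alpha is Some a then a \in lbl e else false)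
    (unzip1 z') (unzip2 z').
  rewrite all2E sz1 sz2 eqxx zip_unzip /=.
  move: HQ; rewrite all2E => /andP[_]; rewrite Ez /z' !all_cat /= all_cat /=.
  by case/and5P=> -> -> _ _ ->.
have [Hl' Eo'] := Q2 HQ'.
have Hm' : matches R (pmap (orig_letter R) (unzip2 z')).
  apply: (lin_sound Hal' (k := 0) erefl).
  by rewrite -Eo'; apply: eq_map => x; rewrite /g subn0.
have Hw' : is_walk_from n0 (unzip1 z').
  move: Hw; rewrite Hes /z' u1cat /= !walk_cat /= walk_cat /=.
  by case/andP=> -> /andP[-> /andP[_ /andP[_ ->]]].
have He' : walk_end n0 (unzip1 z') = t.
  rewrite -Et Hes /z' u1cat /= !walk_end_cat !walk_end_cons walk_end_cat walk_end_cons //.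
have := hmin n0 (unzip1 z').
have Hin : in_walk_sem A n0 (unzip1 z').
  by split => //; exists (pmap (orig_letter R) (unzip2 z')); split => //; apply/hlang.
move=> /(_ (And3 Hin En He')).
rewrite Hes /z' !sz1 !size_cat /= size_cat /= !sz1. lia.
Qed.
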